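(* Let $N$ be a positive integer and let $x_1,\dots,x_N$ be real numbers with $0\le x_i\le 1$ for all $i$ and $\sum_{i=1}^N x_i=2$. Let $S$ be the sum of $x_ix_jx_k$ over all triples of indices $i<j<k$ such that $k-i$ is even and $j-i$ is odd. Then $S<1/3$. *)

(* Defs.v *)
From mathcomp Require Import all_boot all_order all_algebra.
Set Implicit Arguments. Unset Strict Implicit. Unset Printing Implicit Defensive.
Import Order.TTheory GRing.Theory Num.Theory.
Local Open Scope ring_scope.

(* S = sum over i<j<k with k-i even and j-i odd of x_i x_j x_k.
   Indices are 0-based ordinals 'I_N (parities of differences unchanged). *)
Definition tripleS (R : ringType) (N : nat) (x : 'I_N -> R) : R :=
  \sum_(i < N) \sum_(j < N) \sum_(k < N)
    (if [&& (i < j)%N, (j < k)%N, ~~ odd (k - i)%N & odd (j - i)%N]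
     then x i * x j * x k else 0).

(* Main.v *)
Require Import Defs.
From mathcomp Require Import all_boot all_order all_algebra.
From mathcomp Require Import ring lra.
Import Order.TTheory GRing.Theory Num.Theory.
Local Open Scope ring_scope.
Set Implicit Arguments. Unset Strict Implicit.

Definition Pb (R : nzRingType) (y : nat -> R) (b : bool) (m : nat) : R :=
  \sum_(0 <= i < m) (if odd i == b then y i else 0).

Lemma PbS (R : nzRingType) (y : nat -> R) b m :
  Pb y b m.+1 = Pb y b m + (if odd m == b then y m else 0).
Proof. by rewrite /Pb big_nat_recr. Qed.

Definition cc (R : realFieldType) (y : nat -> R) N j : R :=
  y j * Pb y (~~ odd j) j * (Pb y (~~ odd j) N - Pb y (~~ odd j) j).

Definition Ff (R : realFieldType) (E h p q : R) : R :=
  p*q*(E-q) + ((p-q+h)^+3 - 2*(h-q)^+3 + h^+3)/6.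

Definition loss (R : realFieldType) (y : nat -> R) (h : R) j : R :=
  let w := Pb y false j - Pb y true j + h in
  if odd j then (w^+3 - (w - y j)^+3)/6 else ((w + y j)^+3 - w^+3)/6.

Lemma tele (R : realFieldType) (y : nat -> R) N m :
  \sum_(0 <= j < m) (cc y N j + loss y ((Pb y true N - Pb y false N)/2) j)
  = Ff (Pb y true N) ((Pb y true N - Pb y false N)/2) (Pb y false m) (Pb y true m).
Proof.
elim: m => [|m IH].
  by rewrite big_nil /Ff /Pb !big_nil; field.
rewrite big_nat_recr //= IH !PbS /cc /loss.
case: (odd m) => /=;
  move: (Pb y true N) (Pb y false N) (Pb y false m) (Pb y true m) (y m) => E O P Q a;
  rewrite /Ff; field.
all: done.
Qed.
Lemma cube_diff_ge0 (R : realFieldType) (w a : R) : 0 <= a -> 0 <= ((w + a)^+3 - w^+3)/6.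
Proof.
move=> ha.
have -> : ((w + a)^+3 - w^+3)/6 = a * (3 * (w + a/2)^+2 + a^+2/4) / 6 by field.
apply: divr_ge0 => //; apply: mulr_ge0 => //.
by apply: addr_ge0; [apply: mulr_ge0 => //; apply: sqr_ge0 | apply: divr_ge0 => //; apply: sqr_ge0].
Qed.

Lemma cube_diff_gt0 (R : realFieldType) (w a : R) : 0 < a -> 0 < ((w + a)^+3 - w^+3)/6.
Proof.
move=> ha.
have -> : ((w + a)^+3 - w^+3)/6 = a * (3 * (w + a/2)^+2 + a^+2/4) / 6 by field.
apply: divr_gt0 => //; apply: mulr_gt0 => //.
apply: ltr_wpDl; first by apply: mulr_ge0 => //; apply: sqr_ge0.
by apply: divr_gt0 => //; apply: exprn_gt0.
Qed.
Lemma tripleS_nat (R : realFieldType) n (x : 'I_n.+1 -> R) :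
  tripleS x = \sum_(0 <= j < n.+1) cc (fun i => x (inord i)) n.+1 j.
Proof.
set y := fun i => x (inord i).
have hxy : forall i : 'I_n.+1, x i = y (val i) by move=> i; rewrite /y inord_val.
pose g (i j k : nat) := if [&& (i < j)%N, (j < k)%N, ~~ odd (k - i)%N & odd (j - i)%N]
     then y i * y j * y k else 0.
have -> : tripleS x = \sum_(0 <= i < n.+1) \sum_(0 <= j < n.+1) \sum_(0 <= k < n.+1) g i j k.
  rewrite /tripleS big_mkord; apply: eq_bigr => i _.
  rewrite big_mkord; apply: eq_bigr => j _.
  rewrite big_mkord; apply: eq_bigr => k _.
  by rewrite /g !hxy.
rewrite exchange_big; apply: eq_big_nat => j /andP[_ hjN].
pose a i := if ((i < j)%N && odd (j - i)%N) then y i else 0.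
pose b k := if ((j < k)%N && odd (k - j)%N) then y k else 0.
have -> : \sum_(0 <= i < n.+1) \sum_(0 <= k < n.+1) g i j k
    = (\sum_(0 <= i < n.+1) a i) * y j * (\sum_(0 <= k < n.+1) b k).
  rewrite big_distrl /= big_distrl /=; apply: eq_bigr => i _.
  rewrite big_distrr /=; apply: eq_bigr => k _.
  rewrite /g /a /b.
  case hij: (i < j)%N; case hjk: (j < k)%N => /=; rewrite ?mul0r ?mulr0 //.
  have hik : (i <= k)%N by apply: ltnW; apply: ltn_trans hij hjk.
  rewrite !oddB ?(ltnW hij) ?(ltnW hjk) //.
  by case: (odd i); case: (odd j); case: (odd k); rewrite /= ?mul0r ?mulr0 ?mulr1 ?mul1r.
have hA : \sum_(0 <= i < n.+1) a i = Pb y (~~ odd j) j.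
  rewrite (@big_cat_nat _ _ _ j 0 n.+1 _ _ (leq0n j) (ltnW hjN)) /=.
  rewrite [X in _ + X]big1_seq ?addr0; last first.
    by move=> i /andP[_]; rewrite mem_index_iota /a => /andP[]; rewrite leqNgt => /negbTE ->.
  apply: eq_big_nat => i /andP[_ hij].
  rewrite /a hij oddB ?(ltnW hij) //=.
  by case: (odd i); case: (odd j).
have hB : \sum_(0 <= k < n.+1) b k = Pb y (~~ odd j) n.+1 - Pb y (~~ odd j) j.
  rewrite /Pb [in RHS](@big_cat_nat _ _ _ j 0 n.+1 _ _ (leq0n j) (ltnW hjN)) /=.
  rewrite addrAC subrr add0r.
  rewrite (@big_cat_nat _ _ _ j 0 n.+1 _ _ (leq0n j) (ltnW hjN)) /=.
  rewrite [X in X + _]big1_seq ?add0r; last first.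
    by move=> k /andP[_]; rewrite mem_index_iota /b => /andP[_ hkj]; rewrite ltnNge (ltnW hkj).
  apply: eq_big_nat => k /andP[hjk _].
  rewrite /b; move: hjk; rewrite leq_eqVlt => /orP[/eqP <-|hjk].
    by rewrite ltnn; case: (odd j).
  rewrite hjk oddB ?(ltnW hjk) //=.
  by case: (odd k); case: (odd j).
by rewrite hA hB /cc [_ * y j]mulrC.
Qed.

Theorem lemma2 (R : realFieldType) (N : nat) (x : 'I_N -> R)
  (hN : (0 < N)%N)
  (hx : forall i, 0 <= x i <= 1)
  (hsum : \sum_(i < N) x i = 2) :
  tripleS x < 1 / 3.
Proof.
case: N hN x hx hsum => [//|n] _ x hx hsum.
rewrite tripleS_nat.
set y := fun i => x (inord i).
have hy0 : forall i, 0 <= y i by move=> i; case/andP: (hx (inord i)).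
have hsy : \sum_(0 <= i < n.+1) y i = 2.
  by rewrite -hsum big_mkord; apply: eq_bigr => i _; rewrite /y inord_val.
set O := Pb y false n.+1; set E := Pb y true n.+1.
have hOE : O + E = 2.
  rewrite /O /E /Pb -big_split /= -hsy; apply: eq_bigr => i _.
  by case: (odd i); rewrite /= ?addr0 ?add0r.
have ht := tele y n.+1 n.+1.
rewrite big_split /= -/O -/E in ht.
have hF : Ff E ((E - O) / 2) O E = 1/3.
  have -> : O = 2 - E by rewrite -hOE addrK.
  by rewrite /Ff; field; rewrite ?pnatr_eq0.
rewrite hF in ht.
set L := \sum_(0 <= j < n.+1) loss y ((E - O) / 2) j in ht.
have hl0 : forall j, 0 <= loss y ((E - O) / 2) j.
  move=> j; rewrite /loss; case: (odd j).
    by rewrite -[X in X^+3 - _](subrK (y j)); apply: cube_diff_ge0.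
  by apply: cube_diff_ge0.
have hl : 0 < L.
  rewrite lt_def sumr_ge0 ?andbT; last by move=> j _.
  rewrite psumr_neq0; last by move=> j _.
  have : has (fun i => true && (0 < y i)) (index_iota 0 n.+1).
    by rewrite -psumr_neq0 ?hsy ?pnatr_eq0 // => i _.
  apply: sub_has => j /= hj; rewrite /loss; case: (odd j).
    by rewrite -[X in X^+3 - _](subrK (y j)); apply: cube_diff_gt0.
  by apply: cube_diff_gt0.
have -> : \sum_(0 <= j < n.+1) cc y n.+1 j = 1/3 - L by rewrite -ht addrK.
by rewrite ltrBlDr ltrDl.
Qed.
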